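(* Given $\kappa>1$, let $0<\delta<1/4$ be such that $1-2\delta>\delta^{1-1/\kappa}$. Let $G$ be a bipartite graph with vertex parts $U$ and $R$. Then there exists $U'\subseteq U$ such that $G'=G[U'\cup R]$ (with parts $U'$ and $R$) is $\delta^2$-reduced, $d_{\mathrm{avg}}(U')\ge \delta\, d_{\mathrm{avg}}(U)$, and for every real $x\ge\kappa$ we have $$|U'|\,d_{\mathrm{avg}}(U')^x\ \ge\ \delta^x\,|U|\,d_{\mathrm{avg}}(U)^x.$$
   Context: For a set $S$ of vertices of a graph, $d_{\mathrm{avg}}(S)$ is the average degree of the vertices of $S$. A bipartite graph with vertex parts $U$ and $R$ is $\delta$-reduced if every $u\in U$ has degree in $[\delta\, d_{\mathrm{avg}}(U),\ \delta^{-1}d_{\mathrm{avg}}(U)]$ (degrees and averages taken in that bipartite graph). *)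

(* Defs.v *)
From HB Require Import structures.
From mathcomp Require Import all_boot all_order all_algebra.
From mathcomp Require Import reals exp.
Unset Strict Implicit. Unset Printing Implicit Defensive.
Import Order.TTheory GRing.Theory Num.Theory.
Local Open Scope ring_scope.

(* A (finite, simple) bipartite graph with vertex parts U and V is given by
   an adjacency relation e : U -> V -> bool. *)

(* degree of u : U (in G[S ∪ V], which equals its degree in G since V is kept) *)
Definition deg (K : realType) (U V : finType) (e : U -> V -> bool) (u : U) : K :=
  (#|[set v | e u v]|)%:R.

(* average degree of the vertices of S ⊆ U; for S empty this is 0/0 = 0 *)
Definition davg (K : realType) (U V : finType) (e : U -> V -> bool)
  (S : {set U}) : K :=
  (\sum_(u in S) @deg K U V e u) / (#|S|)%:R.

Definition reduced (K : realType) (U V : finType) (e : U -> V -> bool)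
  (delta : K) (S : {set U}) : Prop :=
  forall u, u \in S ->
    delta * @davg K U V e S <= @deg K U V e u /\ @deg K U V e u <= delta^-1 * @davg K U V e S.

(* Main.v *)
Require Import Defs.
From HB Require Import structures.
From mathcomp Require Import all_boot all_order all_algebra.
From mathcomp Require Import reals exp.
From mathcomp Require Import ring lra.
Import Order.TTheory GRing.Theory Num.Theory.
Local Open Scope ring_scope.

Lemma deg_ge0 (K : realType) (U V : finType) (e : U -> V -> bool) u :
  0 <= @deg K U V e u.
Proof. exact: ler0n. Qed.

Lemma sum_lb (K : realType) (U V : finType) (e : U -> V -> bool) (S : {set U}) (a : K) :
  (forall u, u \in S -> a <= @deg K U V e u) ->
  a * #|S|%:R <= \sum_(u in S) @deg K U V e u.
Proof. move=> h; rewrite mulr_natr -sumr_const; exact: ler_sum. Qed.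

Lemma sum_ub (K : realType) (U V : finType) (e : U -> V -> bool) (S : {set U}) (a : K) :
  (forall u, u \in S -> @deg K U V e u <= a) ->
  \sum_(u in S) @deg K U V e u <= a * #|S|%:R.
Proof. move=> h; rewrite mulr_natr -sumr_const; exact: ler_sum. Qed.

Lemma davg_lb (K : realType) (U V : finType) (e : U -> V -> bool) (S : {set U}) (a : K) :
  (0 < #|S|)%N -> (forall u, u \in S -> a <= @deg K U V e u) ->
  a <= @davg K U V e S.
Proof. by move=> S0 h; rewrite /davg ler_pdivlMr ?ltr0n //; exact: sum_lb. Qed.

Lemma davg_ub (K : realType) (U V : finType) (e : U -> V -> bool) (S : {set U}) (a : K) :
  (0 < #|S|)%N -> (forall u, u \in S -> @deg K U V e u <= a) ->
  @davg K U V e S <= a.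
Proof. by move=> S0 h; rewrite /davg ler_pdivrMr ?ltr0n //; exact: sum_ub. Qed.

Lemma davg_ge0 (K : realType) (U V : finType) (e : U -> V -> bool) (S : {set U}) :
  0 <= @davg K U V e S.
Proof.
rewrite /davg; apply: divr_ge0; last exact: ler0n.
by apply: sumr_ge0 => u _; exact: deg_ge0.
Qed.

Lemma good (K : realType) (U V : finType) (e : U -> V -> bool)
  (kappa delta b a n : K) (S : {set U}) :
  1 < kappa -> 0 < delta -> 0 < b -> b <= a ->
  (forall u, u \in S -> a <= @deg K U V e u /\ @deg K U V e u <= a / delta ^+ 2) ->
  0 < n -> n * b `^ kappa <= #|S|%:R * (@davg K U V e S) `^ kappa ->
  @reduced K U V e (delta ^+ 2) S /\ b <= @davg K U V e S /\
  (forall x, kappa <= x -> n * b `^ x <= #|S|%:R * (@davg K U V e S) `^ x).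
Proof.
move=> k1 d0 b0 ba hS n0 hin.
have S0 : (0 < #|S|)%N.
  rewrite lt0n; apply/negP => /eqP h; move: hin; rewrite h mul0r.
  by apply/negP; rewrite -ltNge; apply: mulr_gt0 => //; exact: powR_gt0.
set m := davg _ _ _ _ _ in hin *.
have hm1 : a <= m by apply: davg_lb => // u /hS [].
have hm2 : m <= a / delta ^+ 2 by apply: davg_ub => // u /hS [].
have p0 : 0 < delta ^+ 2 by exact: exprn_gt0.
have m0 : 0 < m by apply: lt_le_trans hm1; exact: lt_le_trans ba.
split.
  move=> u uS; have [h1 h2] := hS u uS; split.
    apply: le_trans h1; rewrite mulrC -ler_pdivlMr //.
  apply: (le_trans h2); rewrite mulrC; apply: ler_wpM2l => //; by rewrite invr_ge0 ltW.
split; first exact: le_trans hm1.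
move=> x kx.
have [y y0 ->] : exists2 y, 0 <= y & x = kappa + y.
  by exists (x - kappa); rewrite ?subr_ge0 // addrC subrK.
rewrite !powRD; try (by apply/implyP => _; rewrite gt_eqF).
rewrite !mulrA; apply: ler_pM => //.
- by apply: mulr_ge0; [exact: ltW | exact: powR_ge0].
- exact: powR_ge0.
- apply: ge0_ler_powR => //; rewrite ?nnegrE; try exact: ltW.
  exact: le_trans ba hm1.
Qed.

Lemma bad (K : realType) (U V : finType) (e : U -> V -> bool)
  (kappa a : K) (S : {set U}) :
  1 < kappa -> 0 < a -> (forall u, u \in S -> a <= @deg K U V e u) ->
  (\sum_(u in S) @deg K U V e u) * a `^ (kappa - 1)
    <= #|S|%:R * (@davg K U V e S) `^ kappa.
Proof.
move=> k1 a0 hS.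
case: (posnP #|S|) => [/eqP|S0].
  rewrite cards_eq0 => /eqP ->; rewrite big_set0 mul0r cards0 mul0r //.
set m := davg _ _ _ _ _.
have hm1 : a <= m by apply: davg_lb.
have Em : \sum_(u in S) @deg K U V e u = #|S|%:R * m.
  by rewrite /m /davg mulrC divfK // pnatr_eq0 -lt0n.
rewrite -(mulr_powRB1 (x := m)) ?subr_gt0 ?(le_trans (ltW a0)) //; last exact: (lt_trans ltr01).
rewrite mulrA -Em ler_wpM2l //.
  by apply: sumr_ge0 => u _; exact: deg_ge0.
apply: ge0_ler_powR => //; rewrite ?nnegrE ?subr_ge0; try exact: ltW.
exact: le_trans (ltW a0) hm1.
Qed.

Lemma cover (K : realType) (f : nat -> K) (t : K) (N : nat) :
  f 0%N <= t -> t < f N -> exists j, (j < N)%N /\ f j <= t /\ t <= f j.+1.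
Proof.
move=> h0; elim: N => [|N IH] hN; first by move: (le_lt_trans h0 hN); rewrite ltxx.
case: (ltP t (f N)) => h.
  by have [j [jN hj]] := IH h; exists j; split => //; exact: ltnW.
by exists N; split => //; split => //; exact: ltW.
Qed.

Lemma pow_grow (K : realType) (c : K) (N : nat) : 2 <= c -> N%:R <= c ^+ N.
Proof.
move=> c2; elim: N => [|N IH]; first by rewrite expr0 ler01.
have h1 : 1 <= c ^+ N by apply: exprn_ege1; lra.
rewrite exprS -natr1; nra.
Qed.

Lemma geom (K : realType) (q : K) (N : nat) :
  (1 - q) * \sum_(j < N) q ^+ j = 1 - q ^+ N.
Proof.
have := subrX1 q N; move=> h.
by rewrite -opprB mulNr -h opprB.
Qed.

Theorem lemma3p3 (K : realType) (kappa delta : K) (U V : finType)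
  (e : U -> V -> bool) :
  1 < kappa -> 0 < delta -> delta < 1 / 4 ->
  delta `^ (1 - kappa^-1) < 1 - 2 * delta ->
  exists U' : {set U},
    @reduced K U V e (delta ^+ 2) U' /\
    delta * @davg K U V e [set: U] <= @davg K U V e U' /\
    (forall x : K, kappa <= x ->
       delta `^ x * (#|U|)%:R * (@davg K U V e [set: U]) `^ x
       <= (#|U'|)%:R * (@davg K U V e U') `^ x).
Proof.
move=> k1 d0 d14 hyp.
set D := deg K U V e.
set d := davg K U V e [set: U].
have dge0 : 0 <= d := davg_ge0 K U V e [set: U].
have [dz|dnz] := eqVneq d 0.
  exists set0; split; first by move=> u; rewrite in_set0.
  split; first by rewrite dz mulr0 davg_ge0.
  move=> x kx; rewrite dz powR0; last by rewrite gt_eqF // (lt_trans ltr01) // (lt_le_trans k1 kx).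
  by rewrite mulr0 cards0 mul0r.
have dpos : 0 < d by rewrite lt_def dnz dge0.
have n0 : (0 < #|U|)%N.
  rewrite lt0n; apply/negP => /eqP h; move: dnz.
  by rewrite /d /davg cardsT h invr0 mulr0 eqxx.
set n : K := #|U|%:R.
have npos : 0 < n by rewrite ltr0n.
have Esum : \sum_u D u = n * d.
  rewrite /d /davg cardsT -/n mulrC divfK ?pnatr_eq0 -?lt0n //.
  by apply: eq_bigl => u; rewrite in_setT.
set b := delta * d.
have b0 : 0 < b by apply: mulr_gt0.
set p := delta ^+ 2.
have p0 : 0 < p by apply: exprn_gt0.
have p16 : p <= 1 / 16 by rewrite /p expr2; nra.
set a := fun j : nat => b / p ^+ j.
have a0 : forall j, 0 < a j.
  by move=> j; rewrite /a divr_gt0 // exprn_gt0.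
have aS : forall j, a j.+1 = a j / p by move=> j; rewrite /a exprSr invfM mulrA.
set S := fun j : nat => [set u | (a j <= D u) && (D u <= a j.+1)].
set N := Num.Def.archi_bound (#|V|%:R / b).
have hN : #|V|%:R < N%:R * b.
  rewrite -ltr_pdivrMr //; apply: archi_boundP; apply: divr_ge0 => //; exact: ltW.
have degV : forall u, D u <= #|V|%:R by move=> u; rewrite /D /deg ler_nat max_card.
have c2 : 2 <= p^-1.
  by rewrite -(ler_pM2r p0) mulVf ?gt_eqF //; lra.
have aN : forall u, D u < a N.
  move=> u; apply: (le_lt_trans (degV u)); apply: (lt_le_trans hN).
  rewrite /a -exprVn mulrC; apply: ler_wpM2l; [exact: ltW | exact: pow_grow].
set q := p `^ (kappa - 1).
have q0 : 0 <= q := powR_ge0 _ _.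
have hq : q < 1 - 2 * delta.
  apply: (le_lt_trans _ hyp).
  rewrite /q /p -(powR_mulrn 2 (ltW d0)) -powRrM.
  apply: ger_powR; first by apply/andP; split; [exact: d0 | lra].
  have kp : 0 < kappa by lra.
  have kinv : kappa * kappa^-1 = 1 by rewrite mulfV ?gt_eqF.
  have ki0 : 0 < kappa^-1 by rewrite invr_gt0.
  nra.
have [j [jN hj]] : exists j, (j < N)%N /\
    n * b `^ kappa <= #|S j|%:R * (davg K U V e (S j)) `^ kappa.
  case: (boolP [exists j : 'I_N,
      n * b `^ kappa <= #|S j|%:R * (davg K U V e (S j)) `^ kappa]).
    by move=> /existsP [j hj]; exists j; split.
  rewrite negb_exists => /forallP hall; exfalso.
  have Ej : forall j : 'I_N, \sum_(u in S j) D u <= n * b * q ^+ j.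
    move=> j; have := hall j; rewrite -ltNge => hlt.
    have hb := @bad K U V e kappa (a j) (S j) k1 (a0 j)
      (fun u => ltac:(rewrite inE => /andP []; done)).
    have key : a j `^ (kappa - 1) * q ^+ j = b `^ (kappa - 1).
      rewrite /q -(powR_mulrn j q0) powRAC (powR_mulrn j (ltW p0)).
      rewrite -powRM; [|exact: ltW (a0 j)|exact: exprn_ge0 (ltW p0)].
      by rewrite /a divfK // expf_neq0 // gt_eqF.
    rewrite -(ler_pM2r (powR_gt0 (kappa - 1) b0)) -key mulrA.
    apply: (le_trans (ler_wpM2r (exprn_ge0 _ q0) hb)).
    apply: (le_trans (ler_wpM2r (exprn_ge0 _ q0) (ltW hlt))).
    have -> : b `^ kappa = b * b `^ (kappa - 1).
      by rewrite (mulr_powRB1 (ltW b0)) // (lt_trans ltr01 k1).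
    rewrite -key.
rewrite le_eqVlt; apply/orP; left; apply/eqP; ring.
  have cov : forall u, D u <= b + \sum_(j < N) (if u \in S j then D u else 0).
    move=> u; case: (ltP (D u) b) => h.
      apply: (le_trans (ltW h)); rewrite lerDl; apply: sumr_ge0 => j _.
      by case: ifP => // _; exact: deg_ge0.
    have h0 : a 0%N <= D u by rewrite /a expr0 divr1.
    have [j [jN [h1 h2]]] := @cover K a (D u) N h0 (aN u).
    rewrite (bigD1 (Ordinal jN)) //= ifT; last by rewrite inE h1 h2.
    have : 0 <= \sum_(i < N | i != Ordinal jN) (if u \in S i then D u else 0).
      by apply: sumr_ge0 => i _; case: ifP => // _; exact: deg_ge0.
    lra.
  have tot : n * d <= n * b + n * b * \sum_(j < N) q ^+ j.
    rewrite -Esum; apply: (le_trans (ler_sum _ (fun u _ => cov u))).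
    rewrite big_split /= sumr_const mulr_natl lerD2l.
    rewrite exchange_big /= mulr_sumr; apply: ler_sum => j _.
    rewrite -big_mkcond.
by rewrite -mulr_natl; exact: Ej.
  have hg := @geom K q N.
  have qN : 0 <= q ^+ N := exprn_ge0 _ q0.
  have G0 : 0 <= \sum_(j < N) q ^+ j by apply: sumr_ge0 => j _; exact: exprn_ge0.
  move: tot hg qN G0; set G := \sum_(j < N) q ^+ j; rewrite /b => tot hg qN G0.
  have h1 : 1 <= delta * (1 + G).
    have X0 : 0 < n * d by apply: mulr_gt0.
    rewrite -(ler_pM2l X0); nra.
  nra.
have ab : b <= a j.
  rewrite /a ler_pdivlMr ?exprn_gt0 //; apply: ler_piMr; [exact: ltW | apply: exprn_ile1; [exact: ltW | lra]].
have hS : forall u, u \in S j -> a j <= D u /\ D u <= a j / delta ^+ 2.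
  by move=> u; rewrite inE => /andP [h1 h2]; rewrite -aS.
have [hr [hb hx]] := @good K U V e kappa delta b (a j) n (S j) k1 d0 b0 ab hS npos hj.
exists (S j); split => //; split => //.
move=> x kx; have := hx x kx.
rewrite /b (powRM (x := delta) (y := d) x (ltW d0) dge0) mulrA.
by rewrite (mulrC n).
Qed.
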